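(* Let $S$ and $T$ be IP-regular semigroups, and suppose $T$ has no idempotent elements. Then the free product $S*T$ is IP-regular.
   Context: For a (partial) semigroup $P$, $E(P)$ is the set of idempotents; any subset $X$ carries the induced partial operation ($ab$ defined iff $ab\in X$). For a sequence $\vec{x}=(x_n)_{n\in\omega}$ all of whose finite ordered products $\prod_{i\in a}x_i$ ($a$ finite nonempty subset of $\omega$) are defined, $\mathrm{FP}(\vec{x})$ is the set of these products, $\mathrm{FP}_1(\vec{x})=\mathrm{FP}((x_{n+1})_n)$; an IP-set is a set containing such an $\mathrm{FP}(\vec{x})$. $X$ is strongly IP-regular if for every sequence $\vec{x}$ in $X$ with all finite products defined in $X$, $x_0\mathrm{FP}_1(\vec{x})$ is not an IP-set of $X$. $P$ is IP-regular if $P\setminus E(P)$ is a union of finitely many strongly IP-regular subsets. *)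

(* Defs.v *)
From mathcomp Require Import all_boot.
Set Implicit Arguments. Unset Strict Implicit. Unset Printing Implicit Defensive.

Section IP.
Variables (X : Type) (op : X -> X -> X).

(* Ordered finite product  x_{i} x_{j1} ... x_{jk}  over the finite nonempty
   index set {i < j1 < ... < jk}, represented by its least element i and the
   strictly increasing tail r (condition: path ltn i r). *)
Fixpoint fin_prod (x : nat -> X) (i : nat) (r : seq nat) : X :=
  match r with
  | [::] => x i
  | j :: r' => op (x i) (fin_prod x j r')
  end.

Definition FP (x : nat -> X) (z : X) : Prop :=
  exists i r, path ltn i r /\ z = fin_prod x i r.

Definition FP1 (x : nat -> X) : X -> Prop := FP (fun n => x n.+1).

(* all finite products of x are defined in (= lie in) the subset A
   (for the induced partial operation on A) *)
Definition FP_in (A : X -> Prop) (x : nat -> X) : Prop :=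
  forall i r, path ltn i r -> A (fin_prod x i r).

Definition IP_set_of (A B : X -> Prop) : Prop :=
  exists y : nat -> X, FP_in A y /\ (forall z, FP y z -> B z).

Definition x0FP1 (x : nat -> X) (z : X) : Prop :=
  exists w, FP1 x w /\ z = op (x 0) w.

Definition strongly_IP_regular (A : X -> Prop) : Prop :=
  forall x : nat -> X, FP_in A x -> ~ IP_set_of A (x0FP1 x).

Definition is_idem (p : X) : Prop := op p p = p.

Definition IP_regular : Prop :=
  exists (n : nat) (A : nat -> X -> Prop),
    (forall p, ~ is_idem p <-> exists2 k, k < n & A k p) /\
    (forall k, k < n -> strongly_IP_regular (A k)).

End IP.

Section FreeProduct.
Variables (S T : Type) (opS : S -> S -> S) (opT : T -> T -> T).

Definition isl (l : S + T) : bool := if l is inl _ then true else false.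

Fixpoint altb (w : seq (S + T)) : bool :=
  match w with
  | x :: ((y :: _) as w') => (isl x != isl y) && altb w'
  | _ => true
  end.

Definition reduced (w : seq (S + T)) : bool :=
  (if w is _ :: _ then true else false) && altb w.

Definition free_product := {w : seq (S + T) | reduced w}.

Definition merge (x : S + T) (w : seq (S + T)) : seq (S + T) :=
  match x, w with
  | inl a, inl b :: w' => inl (opS a b) :: w'
  | inr a, inr b :: w' => inr (opT a b) :: w'
  | _, _ => x :: w
  end.

Lemma altb_head (y z : S + T) w :
  isl y = isl z -> altb (y :: w) = altb (z :: w).
Proof. by case: w => [|u w] //= ->. Qed.

Lemma merge_reduced x w : reduced w -> reduced (merge x w).
Proof.
case: w => [|y w] //= /andP[_ Hw].
case: x => a; case: y Hw => b Hw /=;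
  by rewrite ?Hw // (altb_head _ (inr b)) // (altb_head _ (inl b)).
Qed.

Lemma foldr_merge_reduced (w1 w2 : seq (S + T)) :
  reduced w2 -> reduced (foldr merge w2 w1).
Proof. by move=> H; elim: w1 => [|x w1 IH] //=; apply: merge_reduced. Qed.

(* multiplication in S * T: concatenation followed by reduction *)
Definition fp_mul (u v : free_product) : free_product :=
  exist _ (foldr merge (proj1_sig v) (proj1_sig u))
        (foldr_merge_reduced (proj1_sig u) (proj2_sig v)).

End FreeProduct.

(* Main.v *)
Require Import Defs.
From mathcomp Require Import all_boot.
Set Implicit Arguments. Unset Strict Implicit.

Section Transfer.
Variables (X Y : Type) (opX : X -> X -> X) (opY : Y -> Y -> Y) (f : X -> option Y).
Hypothesis hom : forall a b a' b', f a = Some a' -> f b = Some b' ->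
  f (opX a b) = Some (opY a' b').

Lemma fprod_map (x : nat -> X) (x' : nat -> Y) :
  (forall n, f (x n) = Some (x' n)) ->
  forall r i, f (fin_prod opX x i r) = Some (fin_prod opY x' i r).
Proof.
move=> H; elim=> [|j r IH] i /=; first exact: H.
by apply: hom; [apply: H | apply: IH].
Qed.

Lemma extract (B : Y -> Prop) (x : nat -> X) :
  FP_in opX (fun p => exists2 t, f p = Some t & B t) x ->
  exists x' : nat -> Y, (forall n, f (x n) = Some (x' n)) /\ FP_in opY B x'.
Proof.
move=> Hx.
have H0 : forall n, exists2 t, f (x n) = Some t & B t by move=> n; exact: (Hx n [::]).
have [t0 _ _] := H0 0.
pose x' n := match f (x n) with Some t => t | None => t0 end.
have Ex : forall n, f (x n) = Some (x' n).
  by move=> n; rewrite /x'; case: (H0 n) => t ->.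
exists x'; split => // i r Hp.
case: (Hx i r Hp) => t Ht Bt.
by rewrite (fprod_map Ex) in Ht; case: Ht => ->.
Qed.

Lemma transfer (B : Y -> Prop) : strongly_IP_regular opY B ->
  strongly_IP_regular opX (fun p => exists2 t, f p = Some t & B t).
Proof.
move=> sB x Hx [y [Hy Hyz]].
have [x' [Ex Hx']] := extract Hx.
have [y' [Ey Hy']] := extract Hy.
apply: (sB x' Hx'); exists y'; split => // z [i [r [Hp ->]]].
have [w [[j [r' [Hp' ->]]] Heq]] := Hyz _ (ex_intro _ i (ex_intro _ r (conj Hp erefl))).
have := f_equal f Heq.
rewrite (fprod_map Ey) (hom (Ex 0) (fprod_map (x := fun n => x n.+1)
   (x' := fun n => x' n.+1) (fun n => Ex n.+1) r' j)).
case=> ->; exists (fin_prod opY (fun n => x' n.+1) j r'); split => //.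
by exists j, r'.
Qed.
End Transfer.

Section FP.
Variables (S T : Type) (opS : S -> S -> S) (opT : T -> T -> T).
Hypothesis assocT : associative opT.

Definition omul (a b : option T) : option T :=
  match a, b with
  | Some x, Some y => Some (opT x y)
  | None, _ => b
  | _, None => a
  end.

Lemma omulA : associative omul.
Proof. by case=> [a|] [b|] [c|] //=; rewrite assocT. Qed.

Definition phi : seq (S + T) -> option T :=
  foldr (fun l acc => match l with inl _ => acc | inr t => omul (Some t) acc end) None.

Lemma phi_merge x w : phi (Defs.merge opS opT x w) = phi (x :: w).
Proof.
case: x => a; case: w => [|[b|b] w] //=.
by case: (phi w) => [c|] //=; rewrite assocT.
Qed.

Lemma phi_mul w1 w2 : phi (foldr (Defs.merge opS opT) w2 w1) = omul (phi w1) (phi w2).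
Proof.
elim: w1 => [|x w1 IH] /=; first by case: (phi w2).
rewrite phi_merge /=; case: x => [s|t]; rewrite IH //; exact: (omulA (Some t) (phi w1) (phi w2)).
Qed.

Lemma phi_none w : reduced w -> phi w = None -> exists s, w = [:: inl s].
Proof.
case: w => [|[s|t] w] //=.
  case: w => [|[s'|t'] w] //=; first by exists s.
  by case: (phi w).
by case: (phi w).
Qed.

Definition fS (p : free_product S T) : option S :=
  match sval p with [:: inl s] => Some s | _ => None end.
Definition fT (p : free_product S T) : option T := phi (sval p).

Lemma homS a b a' b' : fS a = Some a' -> fS b = Some b' ->
  fS (fp_mul opS opT a b) = Some (opS a' b').
Proof.
case: a => [wa Ha]; case: b => [wb Hb]; rewrite /fS /=.
case: wa Ha => [|[s|t] [|? ?]] //= _ [<-].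
by case: wb Hb => [|[s'|t'] [|? ?]] //= _ [<-].
Qed.

Lemma homT a b a' b' : fT a = Some a' -> fT b = Some b' ->
  fT (fp_mul opS opT a b) = Some (opT a' b').
Proof. by rewrite /fT /= phi_mul => -> ->. Qed.
End FP.

Theorem mainTheorem12 (S T : Type) (opS : S -> S -> S) (opT : T -> T -> T)
  (assocS : associative opS) (assocT : associative opT)
  (regS : IP_regular opS) (regT : IP_regular opT)
  (noidT : forall t : T, ~ is_idem opT t) :
  IP_regular (fp_mul opS opT).
Proof.
case: regS => nS [AS [HS1 HS2]]; case: regT => nT [AT [HT1 HT2]].
pose A k := if k < nS then (fun p => exists2 s, fS p = Some s & AS k s)
            else (fun p => exists2 t, fT opT p = Some t & AT (k - nS) t).
exists (nS + nT), A; split.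
  move=> p; split.
    move=> Hp.
    case Ep: (phi opT (sval p)) => [t|].
      have [k Hk Akt] := (HT1 t).1 (noidT t).
      exists (nS + k); first by rewrite ltn_add2l.
      by rewrite /A ltnNge leq_addr /= addKn; exists t.
    have [s Es] := phi_none (proj2_sig p) Ep.
    have Hs : ~ is_idem opS s.
      move=> Is; apply: Hp; case: p Ep Es => w Hw /= _ Ew; subst w.
      apply/val_inj => /=; by rewrite /= Is.
    have [k Hk Aks] := (HS1 s).1 Hs.
    exists k; first by apply: leq_trans Hk (leq_addr _ _).
    by rewrite /A Hk; exists s => //; rewrite /fS Es.
  case=> k Hk; rewrite /A; case: ifP => Hkn.
    case=> s Es As Ip.
    have := homS opS opT Es Es; rewrite Ip Es => -[Is].
    by apply: ((HS1 s).2 (ex_intro2 _ _ k Hkn As)).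
  case=> t Et At Ip.
  have := homT opS assocT Et Et; rewrite Ip Et => -[It].
  exact: (noidT t (esym It)).
move=> k Hk; rewrite /A; case: ifP => Hkn.
  apply: transfer; [exact: homS | exact: HS2].
apply: transfer; first exact: homT.
apply: HT2; rewrite ltn_subLR //; by rewrite leqNgt Hkn.
Qed.
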